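(* Let $\mathcal{M}$ be a nontrivial graph matroid family with dimensionality $d$ and threshold $t$. Let $G=G_1\cup G_2$, where $G_1$ and $G_2$ are graphs with at least $t$ vertices in common. If $G_1$ and $G_2$ are both $\mathcal{M}$-rigid, then so is $G$.
   Context: All graphs are finite and simple and have no isolated vertices. A graph matroid family $\mathcal{M}$ assigns to every graph $G$ a matroid $\mathcal{M}(G)$ on $E(G)$ such that (i) every graph isomorphism $V(G)\to V(H)$ induces an isomorphism $\mathcal{M}(G)\to\mathcal{M}(H)$, and (ii) for every subgraph $H$ of $G$, $\mathcal{M}(H)$ is the restriction of $\mathcal{M}(G)$ to $E(H)$. $r(G)$ is the rank of $\mathcal{M}(G)$; $G$ is $\mathcal{M}$-rigid if $r(G)=r(K_{V(G)})$. $\mathcal{M}$ is nontrivial if some graph $G$ has $r(G)<|E(G)|$. An $\mathcal{M}$-circuit is a graph $C$ with $r(C)<|E(C)|$ and $r(C-e)=|E(C)|-1$ for all edges $e$. Dimensionality $d$: minimum over $\mathcal{M}$-circuits of (minimum degree $-1$); threshold $t$: minimum of $|V(C)|-1$ over $\mathcal{M}$-circuits $C$ of minimum degree $d+1$. $G_1\cup G_2$ is the graph with vertex set $V(G_1)\cup V(G_2)$ and edge set $E(G_1)\cup E(G_2)$. *)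

(* Defs.v *)
From HB Require Import structures.
From mathcomp Require Import all_boot all_order.
From mathcomp Require Import finmap.
Set Implicit Arguments. Unset Strict Implicit. Unset Printing Implicit Defensive.
Local Open Scope fset_scope.

(* Vertices are natural numbers (every finite graph is isomorphic to one on
   nat).  An edge {u,v} is encoded as the ordered pair (u,v) with u < v.
   A graph without isolated vertices is determined by its (finite) edge set. *)
Definition Edge := (nat * nat)%type.

Definition is_graph (G : {fset Edge}) : Prop := forall e, e \in G -> e.1 < e.2.

Definition verts (G : {fset Edge}) : {fset nat} :=
  [fset e.1 | e in G] `|` [fset e.2 | e in G].

Definition Kgraph (V : {fset nat}) : {fset Edge} :=
  [fset e in V `*` V | e.1 < e.2].

Definition emap (f : nat -> nat) (e : Edge) : Edge :=
  (minn (f e.1) (f e.2), maxn (f e.1) (f e.2)).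

Definition graph_iso (f : nat -> nat) (G H : {fset Edge}) : Prop :=
  {in verts G &, injective f} /\ [fset emap f e | e in G] = H.

Definition is_matroid (E : {fset Edge}) (I : {fset Edge} -> bool) : Prop :=
  [/\ I fset0,
      (forall A B, B `<=` E -> A `<=` B -> I B -> I A) &
      (forall A B, A `<=` E -> B `<=` E -> I A -> I B -> #|` A| < #|` B| ->
         exists2 x, x \in B `\` A & I (x |` A))].

Definition rankI (I : {fset Edge} -> bool) (F : {fset Edge}) : nat :=
  \max_(A <- fpowerset F | I A) #|` A|.

(* A graph matroid family: M G is the independence predicate of the matroid
   M(G) on E(G). *)
Definition graph_matroid_family (M : {fset Edge} -> {fset Edge} -> bool) : Prop :=
  [/\ (forall G, is_graph G -> is_matroid G (M G)),
      (forall G H f, is_graph G -> is_graph H -> graph_iso f G H ->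
         forall A, A `<=` G -> M G A = M H [fset emap f e | e in A]) &
      (forall G H, is_graph G -> H `<=` G ->
         forall A, A `<=` H -> M H A = M G A)].

Definition grank (M : {fset Edge} -> {fset Edge} -> bool) (G : {fset Edge}) : nat :=
  rankI (M G) G.

Definition rigid M (G : {fset Edge}) : Prop :=
  grank M G = grank M (Kgraph (verts G)).

Definition nontrivial M : Prop :=
  exists G, is_graph G /\ grank M G < #|` G|.

Definition circuit M (C : {fset Edge}) : Prop :=
  [/\ is_graph C, grank M C < #|` C| &
      forall e, e \in C -> grank M (C `\ e) = #|` C| - 1].

Definition deg (G : {fset Edge}) (v : nat) : nat :=
  #|` [fset e in G | (e.1 == v) || (e.2 == v)]|.

(* minimum degree (of a nonempty graph; the default #|G| is never smaller
   than any degree) *)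
Definition mindeg (G : {fset Edge}) : nat :=
  \big[minn/#|` G|]_(v <- verts G) deg G v.

Definition dimensionality M (d : nat) : Prop :=
  (exists C, circuit M C /\ mindeg C = d.+1) /\
  (forall C, circuit M C -> d.+1 <= mindeg C).

Definition threshold M (d t : nat) : Prop :=
  (exists C, [/\ circuit M C, mindeg C = d.+1 & #|` verts C| = t.+1]) /\
  (forall C, circuit M C -> mindeg C = d.+1 -> t.+1 <= #|` verts C|).

(* Main.v *)
Require Import Defs.
From HB Require Import structures.
From mathcomp Require Import all_boot all_order.
From mathcomp Require Import finmap.
From mathcomp Require Import zify.
Set Implicit Arguments. Unset Strict Implicit. Unset Printing Implicit Defensive.
Local Open Scope fset_scope.


Lemma bigmax_att (T : eqType) (s : seq T) (P : pred T) (F : T -> nat) :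
  \max_(i <- s | P i) F i = 0 \/ exists2 x, x \in s & P x /\ \max_(i <- s | P i) F i = F x.
Proof.
elim: s => [|h s IH]; first by left; rewrite big_nil.
rewrite big_cons; case Ph: (P h).
  case: IH => [->|[x xs [Px ->]]]; first by right; exists h; rewrite ?mem_head ?maxn0.
  case: (leqP (F h) (F x)) => hx.
    by right; exists x; rewrite ?inE ?xs ?orbT //; split => //; apply/maxn_idPr.
  by right; exists h; rewrite ?mem_head //; split => //; apply/maxn_idPl/ltnW.
case: IH => [->|[x xs [Px ->]]]; first by left.
by right; exists x; rewrite ?inE ?xs ?orbT.
Qed.

Section Rank.
Variable (I : {fset Edge} -> bool) (E : {fset Edge}).
Hypothesis mat : is_matroid E I.

Lemma rank_ge F A : A `<=` F -> I A -> #|`A| <= rankI I F.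
Proof. by move=> AF IA; apply: (leq_bigmax_seq A); rewrite ?fpowersetE. Qed.

Lemma rank_le F n : (forall A, A `<=` F -> I A -> #|`A| <= n) -> rankI I F <= n.
Proof. by move=> H; apply/bigmax_leqP_seq => A; rewrite fpowersetE; apply: H. Qed.

Lemma rank_att F : exists2 A, A `<=` F & I A /\ #|`A| = rankI I F.
Proof.
case: mat => I0 _ _.
case: (bigmax_att (fpowerset F) I (fun A => #|`A|)) => [H|[A AF [IA H]]].
  by exists fset0; rewrite ?fsub0set //; split => //; rewrite /rankI H cardfs0.
by exists A; rewrite -?fpowersetE.
Qed.

Lemma rank_mono X Y : X `<=` Y -> rankI I X <= rankI I Y.
Proof.
move=> XY; apply: rank_le => A AX IA; apply: rank_ge => //.
exact: fsubset_trans XY.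
Qed.

Lemma rank_card F : rankI I F <= #|`F|.
Proof. by apply: rank_le => A AF _; apply: fsubset_leq_card. Qed.

Lemma max_rank Y B : Y `<=` E -> B `<=` Y -> I B ->
  (forall z, z \in Y -> z \notin B -> ~~ I (z |` B)) -> #|`B| = rankI I Y.
Proof.
move=> YE BY IB mx; apply/eqP; rewrite eqn_leq rank_ge //=.
case: (rank_att Y) => A AY [IA <-]; rewrite leqNgt; apply/negP => lt.
case: mat => _ _ ex.
case: (ex B A (fsubset_trans BY YE) (fsubset_trans AY YE) IB IA lt) => x.
rewrite inE => /andP[xB xA] Ix.
by move: (mx x ((fsubsetP AY) x xA) xB); rewrite Ix.
Qed.

Lemma extend Y B : Y `<=` E -> B `<=` Y -> I B ->
  exists B', [/\ B `<=` B', B' `<=` Y, I B' &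
      forall z, z \in Y -> z \notin B' -> ~~ I (z |` B')].
Proof.
move=> YE; move: {2}(#|` Y `\` B|) (leqnn #|` Y `\` B|) => n.
elim: n B => [|n IH] B.
  move=> c0 BY IB; exists B; split => // z zY zB.
  have : z \in Y `\` B by rewrite inE zB zY.
  by move: c0; rewrite leqn0 cardfs_eq0 => /eqP ->; rewrite inE.
move=> cn BY IB.
case: (boolP (has (fun z => (z \notin B) && I (z |` B)) (enum_fset Y))).
  move=> /hasP [z zY /andP [zB Iz]].
  have zBY : z |` B `<=` Y by rewrite fsubUset fsub1set zY BY.
  case: (IH (z |` B) _ zBY Iz) => [|B' [h1 h2 h3 h4]].
    have -> : Y `\` (z |` B) = (Y `\` B) `\ z.
      by apply/fsetP => w; rewrite !inE; case: (w == z); rewrite ?andbF.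
    have zin : z \in Y `\` B by rewrite inE zB zY.
    by move: cn; rewrite (cardfsD1 z (Y `\` B)) zin.
  exists B'; split => //; exact: fsubset_trans (fsubsetU1 _ _) h1.
move=> nh; exists B; split => // z zY zB; apply/negP => Iz.
by move/hasP: nh; apply; exists z => //; rewrite zB.
Qed.

Lemma cl_all X Y : Y `<=` E -> X `<=` Y ->
  (forall e, e \in Y -> rankI I (e |` X) = rankI I X) -> rankI I Y = rankI I X.
Proof.
move=> YE XY H; case: (rank_att X) => B BX [IB cB].
rewrite -cB -(max_rank YE (fsubset_trans BX XY) IB) //.
move=> z zY zB; apply/negP => Iz.
have := rank_ge (fsetUS [fset z] BX) Iz; rewrite H // -cB cardfsU1 zB /=.
by rewrite ltnn.
Qed.

Lemma setU1_in (e : Edge) (Y : {fset Edge}) : e \in Y -> e |` Y = Y.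
Proof. by move=> eY; apply/fsetP => w; rewrite !inE; case: eqP => // ->. Qed.

Lemma cl_mono X Y e : Y `<=` E -> e \in E -> X `<=` Y ->
  rankI I (e |` X) = rankI I X -> rankI I (e |` Y) = rankI I Y.
Proof.
move=> YE eE XY H; case: (rank_att X) => BX BXX [IBX cBX].
case: (extend YE (fsubset_trans BXX XY) IBX) => BY [h1 h2 h3 h4].
have eYE : e |` Y `<=` E by rewrite fsubUset fsub1set eE YE.
case: (boolP (e \in BY)) => eBY.
  by rewrite setU1_in // (fsubsetP h2).
rewrite -(max_rank YE h2 h3 h4) -(max_rank eYE (fsubset_trans h2 (fsubsetU1 _ _)) h3) //.
move=> z; rewrite !inE => /orP [/eqP -> | zY] zB; last exact: h4.
apply/negP => Ie.
case: mat => _ her _.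
have sub : e |` BX `<=` e |` BY by apply: fsetUS.
have IeX : I (e |` BX).
  apply: (her _ (e |` BY)) => //.
  by rewrite fsubUset fsub1set eE (fsubset_trans h2 YE).
have := rank_ge (fsetUS [fset e] BXX) IeX; rewrite H -cBX cardfsU1.
have -> : e \notin BX by apply: contra eBY => /(fsubsetP h1).
by rewrite ltnn.
Qed.

End Rank.


Lemma vertsP (G : {fset Edge}) z :
  reflect (exists2 e, e \in G & (z == e.1) || (z == e.2)) (z \in verts G).
Proof.
apply: (iffP idP).
  rewrite /verts inE => /orP [/imfsetP [e /= eG ->]|/imfsetP [e /= eG ->]];
  by exists e; rewrite ?eqxx ?orbT.
move=> [e eG /orP [/eqP ->|/eqP ->]]; rewrite /verts inE; apply/orP;
  [left|right]; apply/imfsetP; by exists e.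
Qed.

Lemma edge_v1 (G : {fset Edge}) e : e \in G -> e.1 \in verts G.
Proof. by move=> eG; apply/vertsP; exists e; rewrite ?eqxx. Qed.
Lemma edge_v2 (G : {fset Edge}) e : e \in G -> e.2 \in verts G.
Proof. by move=> eG; apply/vertsP; exists e; rewrite ?eqxx ?orbT. Qed.

Lemma vertsU (G1 G2 : {fset Edge}) : verts (G1 `|` G2) = verts G1 `|` verts G2.
Proof.
apply/fsetP => z; apply/vertsP/fsetUP.
  move=> [e]; rewrite inE => /orP [eG|eG] h; [left|right]; apply/vertsP; by exists e.
by move=> [/vertsP [e eG h]|/vertsP [e eG h]]; exists e; rewrite ?inE ?eG ?orbT.
Qed.

Lemma inK (V : {fset nat}) (e : Edge) :
  (e \in Kgraph V) = [&& e.1 \in V, e.2 \in V & e.1 < e.2].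
Proof. by rewrite /Kgraph !inE /= andbA. Qed.

Lemma K_graph V : is_graph (Kgraph V).
Proof. by move=> e; rewrite inK => /and3P []. Qed.

Lemma K_mono (V V' : {fset nat}) : V `<=` V' -> Kgraph V `<=` Kgraph V'.
Proof.
move=> /fsubsetP VV'; apply/fsubsetP => e; rewrite !inK => /and3P [h1 h2 h3].
by rewrite !VV'.
Qed.

Lemma G_in_K G : is_graph G -> G `<=` Kgraph (verts G).
Proof.
move=> gG; apply/fsubsetP => e eG; rewrite inK edge_v1 ?edge_v2 //=.
exact: gG.
Qed.

Lemma rankI_ext (I J : {fset Edge} -> bool) F :
  (forall A, A `<=` F -> I A = J A) -> rankI I F = rankI J F.
Proof.
move=> H; rewrite /rankI big_seq_cond [RHS]big_seq_cond.
apply: eq_bigl => A; case: (boolP (A \in fpowerset F)) => //=.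
by rewrite fpowersetE => /H.
Qed.

Lemma sub_rank M W H X : graph_matroid_family M -> is_graph W ->
  H `<=` W -> X `<=` H -> rankI (M H) X = rankI (M W) X.
Proof.
case=> _ _ ii gW HW XH; apply: rankI_ext => A AX.
by apply: ii => //; apply: fsubset_trans AX XH.
Qed.


Lemma emap_inj (f : nat -> nat) (C : {fset Edge}) :
  is_graph C -> {in verts C &, injective f} -> {in C &, injective (emap f)}.
Proof.
move=> gC finj [p q] [p' q'] eC eC'; rewrite /emap /= => [[h1 h2]].
have pq : p < q := gC _ eC. have pq' : p' < q' := gC _ eC'.
have vp := edge_v1 eC; have vq := edge_v2 eC.
have vp' := edge_v1 eC'; have vq' := edge_v2 eC'.
simpl in *.
have fpq : f p <> f q by move=> /(finj _ _ vp vq); lia.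
have fpq' : f p' <> f q' by move=> /(finj _ _ vp' vq'); lia.
have : (f p = f p' /\ f q = f q') \/ (f p = f q' /\ f q = f p') by lia.
case=> [[/(finj _ _ vp vp') -> /(finj _ _ vq vq') ->]|[/(finj _ _ vp vq') e1 /(finj _ _ vq vp') e2]] //.
lia.
Qed.

Lemma emap_graph (f : nat -> nat) (C : {fset Edge}) :
  is_graph C -> {in verts C &, injective f} -> is_graph [fset emap f e | e in C].
Proof.
move=> gC finj e' /imfsetP [[p q] eC ->] /=; rewrite /emap /=.
have pq : p < q := gC _ eC.
have fpq : f p <> f q by move=> /(finj _ _ (edge_v1 eC) (edge_v2 eC)) /= h; lia.
lia.
Qed.

Lemma transport M (f : nat -> nat) (C B : {fset Edge}) :
  graph_matroid_family M -> is_graph C -> {in verts C &, injective f} ->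
  B `<=` C ->
  rankI (M [fset emap f e | e in C]) [fset emap f e | e in B] = rankI (M C) B.
Proof.
move=> fam gC finj BC; set C' := [fset emap f e | e in C].
have gC' : is_graph C' by apply: emap_graph.
have iso : graph_iso f C C' by [].
case: fam => _ i _.
have ei := emap_inj gC finj.
have card_im A : A `<=` C -> #|` [fset emap f e | e in A]| = #|` A|.
  move=> /fsubsetP AC; apply/eqP/card_in_imfsetP => u v uA vA.
  by apply: ei; apply: AC.
apply/eqP; rewrite eqn_leq; apply/andP; split.
  apply: rank_le => A' A'B MA'.
  set A := [fset e in B | emap f e \in A'].
  have AB : A `<=` B by apply/fsubsetP => e; rewrite !inE => /andP [].
  have AC : A `<=` C := fsubset_trans AB BC.
  have imA : [fset emap f e | e in A] = A'.
    apply/fsetP => w; apply/imfsetP/idP.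
      by move=> [e /=]; rewrite !inE => /andP [_ h] ->.
    move=> wA; move/fsubsetP: A'B => /(_ w wA) /imfsetP [e /= eB we].
    by exists e => //; rewrite !inE eB -we wA.
  rewrite -imA card_im //; apply: rank_ge => //.
  by rewrite (i C C' f gC gC' iso A AC) imA.
apply: rank_le => A AB MA.
have AC : A `<=` C := fsubset_trans AB BC.
rewrite -card_im //; apply: rank_ge.
  by apply/fsubsetP => w /imfsetP [e /= eA ->]; apply/imfsetP; exists e => //;
     apply: (fsubsetP AB).
by rewrite -(i C C' f gC gC' iso A AC).
Qed.


Lemma build_map (Vc T : {fset nat}) (x y a b t : nat) :
  x \in Vc -> y \in Vc -> x != y -> #|` Vc| = t.+1 -> t <= #|` T| ->
  a \notin T -> b \notin T -> a != b ->
  exists f : nat -> nat, [/\ {in Vc &, injective f}, f x = a, f y = b &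
    forall z, z \in Vc -> z != x -> z != y -> f z \in T].
Proof.
move=> xV yV xy cV tT aT bT ab.
set S := Vc `\ x `\ y.
set s := enum_fset S. set tau := enum_fset T.
have yVx : y \in Vc `\ x by apply/fsetD1P; split => //; rewrite eq_sym.
have cS : (#|` S|).+2 = t.+1.
  by move: cV; rewrite (cardfsD1 x) xV (cardfsD1 y (Vc `\ x)) yVx.
have sz : size s < size tau by rewrite /s /tau; lia.
pose f z := if z == x then a else if z == y then b else nth 0 tau (index z s).
have fS z : z \in Vc -> z != x -> z != y -> f z \in T /\ index z s < size s.
  move=> zV zx zy; rewrite /f (negbTE zx) (negbTE zy).
  have zs : z \in s by rewrite /s /S !inE zx zy zV.
  have ilt : index z s < size s by rewrite index_mem.
  split=> //; have : nth 0 tau (index z s) \in tau.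
    by apply: mem_nth; apply: ltn_trans sz.
  by [].
exists f; split; last first.
- by move=> z zV zx zy; case: (fS z zV zx zy).
- by rewrite /f eq_sym (negbTE xy) eqxx.
- by rewrite /f eqxx.
have fx : f x = a by rewrite /f eqxx.
have fy : f y = b by rewrite /f eq_sym (negbTE xy) eqxx.
have fa z : z \in Vc -> f z = a -> z = x.
  move=> zV; case: (eqVneq z x) => // zx; case: (eqVneq z y) => [->|zy].
    by rewrite fy => /eqP; rewrite eq_sym (negbTE ab).
  by case: (fS z zV zx zy) => h _ e; move: aT; rewrite -e h.
have fb z : z \in Vc -> f z = b -> z = y.
  move=> zV; case: (eqVneq z y) => // zy; case: (eqVneq z x) => [->|zx].
    by rewrite fx => /eqP; rewrite (negbTE ab).
  by case: (fS z zV zx zy) => h _ e; move: bT; rewrite -e h.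
move=> z1 z2 z1V z2V.
case: (eqVneq z1 x) => [->|z1x]; first by rewrite fx => /esym /(fa _ z2V).
case: (eqVneq z1 y) => [->|z1y]; first by rewrite fy => /esym /(fb _ z2V).
case: (eqVneq z2 x) => [->|z2x]; first by rewrite fx => /(fa _ z1V).
case: (eqVneq z2 y) => [->|z2y]; first by rewrite fy => /(fb _ z1V).
case: (fS z1 z1V z1x z1y) => _ i1; case: (fS z2 z2V z2x z2y) => _ i2.
rewrite /f (negbTE z1x) (negbTE z2x) (negbTE z1y) (negbTE z2y) => /eqP.
have i1' : index z1 s < size tau by lia.
have i2' : index z2 s < size tau by lia.
rewrite (nth_uniq 0 i1' i2' (fset_uniq T)) => /eqP h.
have z1s : z1 \in s by rewrite -index_mem.
have z2s : z2 \in s by rewrite -index_mem.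
by rewrite -(nth_index 0 z1s) h (nth_index 0 z2s).
Qed.


Lemma pair_in_Y (V1 V2 : {fset nat}) m n : m != n ->
  m \in V1 `|` V2 -> n \in V1 `|` V2 -> (m \in V1 `&` V2) || (n \in V1 `&` V2) ->
  (minn m n, maxn m n) \in Kgraph V1 `|` Kgraph V2.
Proof.
move=> mn hm hn hT; rewrite inE !inK /=.
have lt : minn m n < maxn m n by move: mn => /eqP; lia.
rewrite lt !andbT.
have h12 : (m \in V1) && (n \in V1) || (m \in V2) && (n \in V2).
  move: hm hn hT => /fsetUP hm /fsetUP hn /orP [/fsetIP [m1 m2]|/fsetIP [n1 n2]].
    by case: hn => hn; rewrite m1 m2 hn ?orbT.
  by case: hm => hm; rewrite n1 n2 hm ?orbT.
have [[-> ->]|[-> ->]] : (minn m n = m /\ maxn m n = n) \/ (minn m n = n /\ maxn m n = m) by lia.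
  by [].
by move: h12; rewrite ![(n \in _) && _]andbC.
Qed.

Lemma circ_edge M t (C : {fset Edge}) (V1 V2 : {fset nat}) (a b : nat) :
  graph_matroid_family M -> circuit M C -> #|` verts C| = t.+1 ->
  t <= #|` V1 `&` V2| -> a < b ->
  ((a \in V1) && (a \notin V2) && (b \in V2) && (b \notin V1)) ||
  ((a \in V2) && (a \notin V1) && (b \in V1) && (b \notin V2)) ->
  rankI (M (Kgraph (V1 `|` V2))) ((a, b) |` (Kgraph V1 `|` Kgraph V2)) =
  rankI (M (Kgraph (V1 `|` V2))) (Kgraph V1 `|` Kgraph V2).
Proof.
move=> fam [gC rk crit] vC tT ab hab.
set W := Kgraph (V1 `|` V2). set Y := Kgraph V1 `|` Kgraph V2.
set T := V1 `&` V2.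
have [aT bT aV bV] : [/\ a \notin T, b \notin T, a \in V1 `|` V2 & b \in V1 `|` V2].
  by move: hab; rewrite /T !inE; case: (a \in V1); case: (a \in V2);
     case: (b \in V1); case: (b \in V2).
have abn : a != b by move: ab => /ltn_eqF ->.
case: (fset_0Vmem C) => [C0|[[x y] e0C]].
  by move: rk; rewrite C0 cardfs0.
have xy : x < y := gC _ e0C.
have xV : x \in verts C := edge_v1 e0C.
have yV : y \in verts C := edge_v2 e0C.
have xyn : x != y by move: xy => /ltn_eqF ->.
case: (build_map xV yV xyn vC tT aT bT abn) => f [finj fx fy fT].
have fW z : z \in verts C -> f z \in V1 `|` V2.
  move=> zV; case: (eqVneq z x) => [->|zx]; first by rewrite fx.
  case: (eqVneq z y) => [->|zy]; first by rewrite fy.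
  by move: (fT z zV zx zy); rewrite /T !inE => /andP [-> ->].
set C' := [fset emap f e | e in C].
set C'' := [fset emap f e | e in C `\ (x, y)].
have key : C'' `<=` Y.
  apply/fsubsetP => w /imfsetP [[p q] /= /fsetD1P [pqn pqC] ->].
  have pq : p < q := gC _ pqC.
  have pV : p \in verts C := edge_v1 pqC.
  have qV : q \in verts C := edge_v2 pqC.
  apply: pair_in_Y; rewrite ?fW //.
    by apply/eqP => /(finj _ _ pV qV) /= h; move: pq; rewrite h ltnn.
  case: (eqVneq q y) => [qy|qy].
    have px : p != x by apply: contraNneq pqn => ->; rewrite qy.
    have py : p != y by rewrite -qy; apply/eqP => h; move: pq; rewrite h ltnn.
    by rewrite fT.
  case: (eqVneq q x) => [qx|qx]; last by rewrite (fT q) ?orbT.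
  have px : p != x by rewrite -qx; apply/eqP => h; move: pq; rewrite h ltnn.
  have py : p != y by apply/eqP => h; move: pq xy; rewrite h qx => /ltn_trans H /H; rewrite ltnn.
  by rewrite fT.
have eab : emap f (x, y) = (a, b).
  by rewrite /emap /= fx fy (minn_idPl (ltnW ab)) (maxn_idPr (ltnW ab)).
have C'E : C' = (a, b) |` C''.
  apply/fsetP => w; rewrite in_fsetU in_fset1; apply/imfsetP/orP.
    move=> [e /= eC ->]; case: (eqVneq e (x, y)) => [->|ne]; first by left; rewrite eab.
    by right; apply/imfsetP; exists e => //=; apply/fsetD1P.
  move=> [/eqP ->|/imfsetP [e /= /fsetD1P [_ eC] ->]]; last by exists e.
  by exists (x, y).
have gW : is_graph W := @K_graph (V1 `|` V2).
have YW : Y `<=` W by rewrite fsubUset !K_mono // ?fsubsetUl ?fsubsetUr.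
have abW : (a, b) \in W by rewrite inK /= aV bV ab.
have C'W : C' `<=` W by rewrite C'E fsubUset fsub1set abW (fsubset_trans key YW).
have C''C' : C'' `<=` C' by rewrite C'E fsubsetU1.
have matW : is_matroid W (M W) by case: fam => h _ _; apply: h.
apply: (cl_mono matW YW abW key).
apply/eqP; rewrite eqn_leq; apply/andP; split; last exact: rank_mono (fsubsetU1 _ _).
rewrite -C'E -(sub_rank fam gW C'W (fsubset_refl _)).
rewrite -(sub_rank fam gW C'W C''C').
rewrite /C' /C'' (transport fam gC finj (fsubset_refl C)).
rewrite (transport fam gC finj (fsubD1set C (x, y))).
have h1 : rankI (M C) (C `\ (x, y)) = #|` C| - 1.
  rewrite -(crit _ e0C) /grank.
  by rewrite (sub_rank fam gC (fsubD1set C (x, y)) (fsubset_refl _)).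
rewrite h1.
have rk' : rankI (M C) C < #|` C| := rk.
by rewrite leq_subRL ?add1n // (leq_ltn_trans _ rk').
Qed.


Lemma orient (A B : {fset nat}) (a b : nat) :
  a \in A `|` B -> b \in A `|` B ->
  ~~ ((a \in A) && (b \in A) || (a \in B) && (b \in B)) ->
  ((a \in A) && (a \notin B) && (b \in B) && (b \notin A)) ||
  ((a \in B) && (a \notin A) && (b \in A) && (b \notin B)).
Proof.
rewrite !inE.
by case: (a \in A); case: (a \in B); case: (b \in A); case: (b \in B).
Qed.

Unset Implicit Arguments.

Theorem lemma2p3 (M : {fset Edge} -> {fset Edge} -> bool) (d t : nat)
  (G1 G2 : {fset Edge}) :
  graph_matroid_family M -> nontrivial M ->
  dimensionality M d -> threshold M d t ->
  is_graph G1 -> is_graph G2 ->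
  t <= #|` verts G1 `&` verts G2| ->
  rigid M G1 -> rigid M G2 -> rigid M (G1 `|` G2).
Proof.
move=> fam _ _ [[C [circ _ vC]] _] g1 g2 tle rig1 rig2.
set V1 := verts G1 in tle rig1 *. set V2 := verts G2 in tle rig2 *.
rewrite /rigid vertsU -/V1 -/V2.
set W := Kgraph (V1 `|` V2).
set K1 := Kgraph V1 in rig1 *. set K2 := Kgraph V2 in rig2 *.
set Y := K1 `|` K2.
have gW : is_graph W := @K_graph (V1 `|` V2).
have matW : is_matroid W (M W) by case: fam => h _ _; apply: h.
have K1W : K1 `<=` W by apply: K_mono; rewrite fsubsetUl.
have K2W : K2 `<=` W by apply: K_mono; rewrite fsubsetUr.
have G1K : G1 `<=` K1 := G_in_K g1.
have G2K : G2 `<=` K2 := G_in_K g2.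
have YW : Y `<=` W by rewrite fsubUset K1W K2W.
have GY : G1 `|` G2 `<=` Y by apply: fsetUSS.
have GW : G1 `|` G2 `<=` W := fsubset_trans GY YW.
have gr H : H `<=` W -> grank M H = rankI (M W) H.
  by move=> HW; rewrite /grank (sub_rank fam gW HW (fsubset_refl _)).
move: rig1 rig2; rewrite /rigid !gr ?(fsubset_trans G1K) ?(fsubset_trans G2K) //.
move=> rig1 rig2.
rewrite /grank.
have stepA : rankI (M W) Y = rankI (M W) (G1 `|` G2).
  apply: (cl_all matW YW GY) => e /fsetUP [eK|eK].
    apply: (cl_mono matW GW (fsubsetP K1W _ eK) (fsubsetUl _ _)).
    apply/eqP; rewrite eqn_leq; apply/andP; split; last exact: rank_mono (fsubsetU1 _ _).
    rewrite rig1 rank_mono //.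
    by rewrite fsubUset fsub1set eK.
  apply: (cl_mono matW GW (fsubsetP K2W _ eK) (fsubsetUr _ _)).
  apply/eqP; rewrite eqn_leq; apply/andP; split; last exact: rank_mono (fsubsetU1 _ _).
  rewrite rig2 rank_mono //.
  by rewrite fsubUset fsub1set eK.
have stepB : rankI (M W) W = rankI (M W) Y.
  apply: (cl_all matW (fsubset_refl _) YW) => e eW.
  case: (boolP (e \in Y)) => eY; first by rewrite setU1_in.
  move: e eW eY => [a b]; rewrite inK /= => /and3P [aV bV ab].
  rewrite /Y inE !inK /= ab !andbT => hn.
  apply: (circ_edge fam circ vC tle ab).
  exact: orient.
by rewrite stepB stepA.
Qed.
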